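(* Let $n,N,L\ge 1$ be integers, $0<p<1$ and $0<\epsilon_2<1$. Define $$N_{\mathsf{Th}}=\frac{\log_2\left(\left(\frac{\epsilon_2+2^{n}}{2^{n}}\right)^{1/n}-1\right)}{\log_2(p)}.$$ If $N\ge N_{\mathsf{Th}}$, then in the random model described in the context, with probability at least $1-\epsilon_2$ the set $\mathbb{L}_{\mathcal{P}^*,\mathcal{Y}}$ of labellings of the true partitioning equals $\{\mathcal{L}^*\}$.
   Context: Model: Let $M=2^n$ and $C=\{0,1\}^n=\{\mathbf{x}_1,\dots,\mathbf{x}_M\}$ (addresses). Data parts $\mathbf{d}_1,\dots,\mathbf{d}_M$ are independent and uniform on $\{0,1\}^L$; strand $i$ is $(\mathbf{x}_i,\mathbf{d}_i)$. Each strand is transmitted $N$ times through $\mathsf{BEC}(p)$ (each symbol independently replaced by $*$ with probability $p$, independently across transmissions and strands); $\mathcal{S}_N((\mathbf{x}_i,\mathbf{d}_i))$ is the multiset of the $N$ reads of strand $i$ and $\mathcal{Y}$ the multiset of all $MN$ reads. An address $\mathbf{x}$ is compatible with a read $(\mathbf{y},\mathbf{d}')$ if $\mathbf{x}$ and $\mathbf{y}$ coincide at all non-erased positions of $\mathbf{y}$. The true partitioning is $\mathcal{P}^*=\{P_1,\dots,P_M\}$ with $P_i=\mathcal{S}_N((\mathbf{x}_i,\mathbf{d}_i))$. A labelling of $\mathcal{P}^*$ is a vector $\mathcal{L}$ of $M$ distinct addresses from $C$ such that, for each $i\in[M]$, $\mathcal{L}[i]$ is compatible with every read in $P_i$; $\mathbb{L}_{\mathcal{P}^*,\mathcal{Y}}$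 is the set of all such labellings, and the true labelling $\mathcal{L}^*$ has $\mathcal{L}^*[i]=\mathbf{x}_i$ for all $i$. *)

(* Defs.v *)
From HB Require Import structures.
From mathcomp Require Import all_boot all_order all_algebra.
From mathcomp Require Import reals exp.
Set Implicit Arguments. Unset Strict Implicit. Unset Printing Implicit Defensive.
Import Order.TTheory GRing.Theory Num.Theory.
Local Open Scope ring_scope.

Definition addr (n : nat) := {ffun 'I_n -> bool}.
(* M = |C| = 2^n ; strands are indexed by 'I_M *)
Definition Mof (n : nat) := #|addr n|.
Definition xaddr (n : nat) (i : 'I_(Mof n)) : addr n := enum_val i.

(* an outcome of the random experiment:
   data parts d_i, and erasure patterns: for strand i and transmission j,
   which symbols (address positions inl k, data positions inr k) are erased. *)
Definition outcome (n N L : nat) :=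
  ({ffun 'I_(Mof n) -> {ffun 'I_L -> bool}} *
   {ffun ('I_(Mof n) * 'I_N) -> {ffun ('I_n + 'I_L) -> bool}})%type.

(* a read: word over {0,1,*}, None = erasure symbol * *)
Definition read (n L : nat) :=
  ({ffun 'I_n -> option bool} * {ffun 'I_L -> option bool})%type.

Definition the_read n N L (w : outcome n N L) (i : 'I_(Mof n)) (j : 'I_N)
  : read n L :=
  ([ffun k => if w.2 (i, j) (inl k) then None else Some (xaddr i k)],
   [ffun k => if w.2 (i, j) (inr k) then None else Some (w.1 i k)]).

Definition compatible n L (x : addr n) (r : read n L) : bool :=
  [forall k, if r.1 k is Some b then x k == b else true].

(* Lab is a labelling of the true partitioning P* (P_i = reads of strand i) *)
Definition is_labelling n N L (w : outcome n N L)
  (Lab : {ffun 'I_(Mof n) -> addr n}) : bool :=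
  injectiveb Lab &&
  [forall i, forall j : 'I_N, compatible (Lab i) (the_read w i j)].

Definition true_labelling n : {ffun 'I_(Mof n) -> addr n} := [ffun i => xaddr i].

Definition unique_labelling n N L (w : outcome n N L) : bool :=
  [forall Lab, is_labelling w Lab == (Lab == true_labelling n)].

(* probability mass of an outcome: data uniform and independent,
   each symbol of each transmission erased independently with prob. p *)
Definition weight {R : realType} (p : R) n N L (w : outcome n N L) : R :=
  (2%:R ^- (L * Mof n)) *
  \prod_(ij : 'I_(Mof n) * 'I_N) \prod_(k : 'I_n + 'I_L)
     (if w.2 ij k then p else 1 - p).

Definition Prob {R : realType} (p : R) n N L (E : pred (outcome n N L)) : R :=
  \sum_(w | E w) weight p w.

Definition log2 {R : realType} (x : R) : R := ln x / ln 2.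

Definition N_Th {R : realType} (n : nat) (p eps2 : R) : R :=
  log2 (powR ((eps2 + 2%:R ^+ n) / 2%:R ^+ n) (n%:R^-1) - 1) / log2 p.

(* Main.v *)
Require Import Defs.
From HB Require Import structures.
From mathcomp Require Import all_boot all_order all_algebra.
From mathcomp Require Import reals exp.
From mathcomp Require Import ring lra.
Import Order.TTheory GRing.Theory Num.Theory.
Local Open Scope ring_scope.

Lemma sum_ffun2 (R : realType) (I K : finType) (G : I -> K -> bool -> R) :
  \sum_(e : {ffun I -> {ffun K -> bool}}) \prod_i \prod_k G i k (e i k)
  = \prod_i \prod_k (G i k true + G i k false).
Proof.
rewrite -(bigA_distr_bigA (fun i (g : {ffun K -> bool}) => \prod_k G i k (g k))).
apply: eq_bigr => i _.
rewrite -(bigA_distr_bigA (fun k b => G i k b)).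
by apply: eq_bigr => k _; rewrite big_bool.
Qed.

Definition Q (R : realType) (p : R) (I K : finType) (e : {ffun I -> {ffun K -> bool}}) : R :=
  \prod_ij \prod_k (if e ij k then p else 1 - p).
Arguments Q {R} p {I K} e.

Lemma Q_ge0 (R : realType) (p : R) (I K : finType) (e : {ffun I -> {ffun K -> bool}}) :
  0 <= p <= 1 -> 0 <= Q p (e : {ffun I -> {ffun K -> bool}}).
Proof.
move=> /andP[h0 h1]; apply: prodr_ge0 => ij _; apply: prodr_ge0 => k _.
by case: ifP => // _; rewrite subr_ge0.
Qed.

Lemma Q_sum1 (R : realType) (p : R) (I K : finType) :
  \sum_(e : {ffun I -> {ffun K -> bool}}) Q p e = 1.
Proof.
rewrite /Q (@sum_ffun2 _ _ _ (fun _ _ (b : bool) => if b then p else 1 - p)) /=.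
by apply: big1 => i _; apply: big1 => k _; rewrite addrC subrK.
Qed.

Lemma Q_A (R : realType) (p : R) (I J K : finType) (i0 : I) (k0 : K) :
  0 <= p <= 1 ->
  \sum_(e : {ffun I * J -> {ffun K -> bool}} | [forall j : J, e (i0, j) k0]) Q p e
  <= p ^+ #|J|.
Proof.
move=> hp.
pose S (ij : I * J) (k : K) := (ij.1 == i0) && (k == k0).
pose H (e : {ffun I * J -> {ffun K -> bool}}) : R :=
  \prod_ij \prod_k (if S ij k then (e ij k)%:R else 1).
have -> : \sum_(e : {ffun I * J -> {ffun K -> bool}} | [forall j : J, e (i0, j) k0]) Q p e =
          \sum_(e : {ffun I * J -> {ffun K -> bool}} | [forall j : J, e (i0, j) k0]) Q p e * H e.
  apply: eq_bigr => e /forallP he.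
  rewrite [H e]big1 ?mulr1 // => -[i j] _; apply: big1 => k _.
  rewrite /S /=; case: eqP => //= -> ; case: eqP => //= ->.
  by rewrite he.
apply: (@le_trans _ _ (\sum_(e : {ffun I * J -> {ffun K -> bool}}) Q p e * H e)).
  rewrite [X in _ <= X](bigID (fun e : {ffun I * J -> {ffun K -> bool}} => [forall j : J, e (i0, j) k0])) /= lerDl.
  apply: sumr_ge0 => e _; apply: mulr_ge0; first exact: Q_ge0.
  by apply: prodr_ge0 => ij _; apply: prodr_ge0 => k _; case: ifP.
have -> : \sum_(e : {ffun I * J -> {ffun K -> bool}}) Q p e * H e =
   \sum_(e : {ffun I * J -> {ffun K -> bool}}) \prod_ij \prod_k
      ((fun ij k (b : bool) => (if b then p else 1 - p) * (if S ij k then b%:R else 1)) ij k (e ij k)).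
  apply: eq_bigr => e _; rewrite /Q /H -big_split /=.
  by apply: eq_bigr => ij _; rewrite -big_split.
rewrite (@sum_ffun2 _ _ _ (fun ij k (b : bool) => (if b then p else 1 - p) * (if S ij k then b%:R else 1))) /=.
rewrite (eq_bigr (fun ij : I * J => if ij.1 == i0 then p else 1)); last first.
  move=> ij _; rewrite /S; case: eqP => _ /=.
    rewrite (bigD1 k0) //= eqxx big1 /=.
      by rewrite mulr1 mulr0 addr0 mulr1.
    by move=> k /negPf -> /=; rewrite !mulr1 addrC subrK.
  by apply: big1 => k _ /=; rewrite !mulr1 addrC subrK.
rewrite -(pair_bigA _ (fun i j => if i == i0 then p else 1)) /=.
rewrite (bigD1 i0) //= eqxx prodr_const big1 ?mulr1 //.
by move=> i /negPf ->; rewrite big1.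
Qed.

Lemma Prob_red (R : realType) (p : R) n N L
  (P : pred {ffun ('I_(Mof n) * 'I_N) -> {ffun ('I_n + 'I_L) -> bool}}) :
  Prob p (fun w : outcome n N L => P w.2) = \sum_(e | P e) Q p e.
Proof.
rewrite /Prob.
set c : R := 2%:R ^- (L * Mof n).
have -> : \sum_(w : outcome n N L | P w.2) weight p w =
   \sum_(w : outcome n N L | predT w.1 && P w.2)
     (fun (d : {ffun 'I_(Mof n) -> {ffun 'I_L -> bool}}) e => c * Q p e) w.1 w.2.
  by apply: eq_bigr.
rewrite -(pair_big predT P (fun (d : {ffun 'I_(Mof n) -> {ffun 'I_L -> bool}}) e => c * Q p e)) /=.
under eq_bigr do rewrite -mulr_sumr.
rewrite sumr_const -mulr_natl mulrA.
have -> : (#|[pred d : {ffun 'I_(Mof n) -> {ffun 'I_L -> bool}} | predT d]|%:R * c) = 1 :> R.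
  rewrite cardT /= -cardE card_ffun card_ffun card_bool card_ord -expnM natrX mulnC.
  by rewrite /c card_ord mulnC divff // expf_neq0 // pnatr_eq0.
by rewrite mul1r.
Qed.

Definition Good (I J : finType) n L (e : {ffun (I * J) -> {ffun ('I_n + 'I_L) -> bool}}) : bool :=
  [forall i, [forall k : 'I_n, [exists j, ~~ e (i, j) (inl k)]]].
Arguments Good {I J n L} e.

Lemma union (R : realType) (p : R) (I J : finType) n L :
  0 <= p <= 1 ->
  \sum_(e : {ffun (I * J) -> {ffun ('I_n + 'I_L) -> bool}} | ~~ Good e) Q p e <=
  \sum_(i : I) \sum_(k : 'I_n)
     \sum_(e : {ffun (I * J) -> {ffun ('I_n + 'I_L) -> bool}} | [forall j : J, e (i, j) (inl k)]) Q p e.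
Proof.
move=> hp.
pose T := {ffun (I * J) -> {ffun ('I_n + 'I_L) -> bool}}.
pose f (e : T) i k := if [forall j : J, e (i, j) (inl k)] then Q p e else 0.
have f0 : forall e i k, 0 <= f e i k.
  by move=> e i k; rewrite /f; case: ifP => // _; exact: Q_ge0.
apply: (@le_trans _ _ (\sum_(e : T | ~~ Good e) \sum_i \sum_k f e i k)).
  apply: ler_sum => e.
  rewrite /Good negb_forall => /existsP[i]; rewrite negb_forall => /existsP[k].
  rewrite negb_exists => /forallP hj.
  rewrite (bigD1 i) //= (bigD1 k) //= {1}/f ifT; last first.
    by apply/forallP => j; move: (hj j); rewrite negbK.
  rewrite -addrA lerDl addr_ge0 // sumr_ge0 // => i' _.
  by apply: sumr_ge0 => k' _.
apply: (@le_trans _ _ (\sum_(e : T) \sum_i \sum_k f e i k)).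
  rewrite [X in _ <= X](bigID (fun e : T => ~~ Good e)) /= lerDl.
  by apply: sumr_ge0 => e _; apply: sumr_ge0 => i _; apply: sumr_ge0 => k _.
rewrite exchange_big; apply: ler_sum => i _; rewrite exchange_big.
by apply: ler_sum => k _; rewrite [X in _ <= X]big_mkcond.
Qed.

Lemma good_unique n N L (w : outcome n N L) : Good w.2 -> unique_labelling w.
Proof.
move=> hG; apply/forallP => Lab; apply/eqP.
case: (eqVneq Lab (true_labelling n)) => [->|hne].
  apply/andP; split.
    by apply/injectiveP => i j; rewrite !ffunE; exact: enum_val_inj.
  apply/forallP=> i; apply/forallP=> j; apply/forallP=> k.
  by rewrite /the_read /= !ffunE; case: ifP.
apply/negbTE/negP => /andP[_ /forallP hc].
move/negP: hne; apply; apply/eqP/ffunP => i; rewrite ffunE; apply/ffunP => k.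
move: hG => /forallP /(_ i) /forallP /(_ k) /existsP [j hj].
move: (hc i) => /forallP /(_ j) /forallP /(_ k).
by rewrite /the_read /= ffunE (negbTE hj) => /eqP.
Qed.
Lemma bern (R : realType) (q : R) (n : nat) : 0 <= q -> 1 + q *+ n <= (1 + q) ^+ n.
Proof.
move=> hq; elim: n => [|n IH]; first by rewrite expr0 mulr0n addr0.
rewrite exprS mulrS.
have h1 : 0 <= q *+ n by rewrite mulrn_wge0.
have h2 : 1 + q *+ n <= (1 + q) ^+ n := IH.
have : (1 + q) * (1 + q *+ n) <= (1 + q) * (1 + q) ^+ n.
  by rewrite ler_wpM2l // addr_ge0.
nra.
Qed.

Lemma numeric (R : realType) (n N : nat) (p eps2 : R) :
  (1 <= n)%N -> 0 < p -> p < 1 -> 0 < eps2 ->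
  N_Th n p eps2 <= N%:R ->
  (2 ^ n * n)%:R * p ^+ N <= eps2.
Proof.
move=> hn hp hp1 he hN.
set t : R := 2%:R ^+ n.
have ht : 0 < t by rewrite exprn_gt0.
set b := (eps2 + t) / t.
have hb : 1 < b by rewrite /b ltr_pdivlMr // mul1r ltrDr.
have hr : 0 < (n%:R : R)^-1 by rewrite invr_gt0 ltr0n.
set a := b `^ (n%:R^-1).
have ha : 1 < a.
  have := (@gt0_ltr_powR R _ hr 1 b). rewrite powR1 /=. apply.
  - by rewrite qualifE /=.
  - by rewrite qualifE /= ltW // (lt_trans _ hb).
  - done.
have hln2 : 0 < ln (2%:R : R) by rewrite ln_gt0 // ltr1n.
have hlnp : ln p < 0 by rewrite ln_lt0 // hp hp1.
move: hN; rewrite /N_Th /log2 -/t -/b -/a.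
have -> : ln (a - 1) / ln 2%:R / (ln p / ln 2%:R) = ln (a - 1) / ln p.
  by rewrite invf_div mulrA divfK // gt_eqF.
move=> hN.
have hq : p ^+ N <= a - 1.
  have e1 : ln (a - 1) = ln (a - 1) / ln p * ln p by rewrite divfK // lt_eqF.
  have : N%:R * ln p <= ln (a - 1).
    by rewrite e1; apply: ler_wnM2r => //; exact: ltW.
  rewrite mulr_natl -lnXn // ler_ln //.
  - by rewrite qualifE /= exprn_gt0.
  - by rewrite qualifE /= subr_gt0.
have han : a ^+ n = b.
  rewrite -powR_mulrn; last by rewrite ltW // (lt_trans _ ha).
  by rewrite /a -powRrM mulVf ?powRr1 // ?pnatr_eq0 -?lt0n // ltW // (lt_trans _ hb).
have hq0 : 0 <= p ^+ N by rewrite exprn_ge0 // ltW.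
have h1 : (1 + p ^+ N) ^+ n <= b.
  rewrite -han; apply: lerXn2r.
  - by rewrite qualifE /= addr_ge0.
  - by rewrite qualifE /= ltW // (lt_trans _ ha).
  - by rewrite lerBrDl in hq.
have h2 := @bern R _ n hq0.
have h3 : p ^+ N *+ n <= eps2 / t.
  have : 1 + p ^+ N *+ n <= b by apply: le_trans h1.
  by rewrite /b mulrDl divff ?gt_eqF // addrC lerD2r.
rewrite natrM natrX -/t -mulrA mulr_natl.
by rewrite -ler_pdivlMl // mulrC.
Qed.

Theorem lemma4 (R : realType) (n N L : nat) (p eps2 : R) :
  (1 <= n)%N -> (1 <= N)%N -> (1 <= L)%N ->
  0 < p -> p < 1 -> 0 < eps2 -> eps2 < 1 ->
  N_Th n p eps2 <= N%:R ->
  1 - eps2 <= Prob p (fun w : outcome n N L => unique_labelling w).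
Proof.
move=> hn hN hL hp hp1 he he1 hTh.
have hp01 : 0 <= p <= 1 by rewrite !ltW.
have hw : forall w : outcome n N L, 0 <= weight p w.
  move=> w; apply: mulr_ge0; first by rewrite invr_ge0 exprn_ge0.
  apply: prodr_ge0 => ij _; apply: prodr_ge0 => k _.
  by case: ifP => _; rewrite ?subr_ge0 ltW.
apply: (@le_trans _ _ (Prob p (fun w : outcome n N L => Good w.2))); last first.
  rewrite /Prob [X in X <= _]big_mkcond [X in _ <= X]big_mkcond.
  apply: ler_sum => w _.
  case hG: (Good w.2); first by rewrite (@good_unique _ _ _ w hG).
  by case: ifP.
rewrite (@Prob_red R p n N L (fun e => Good e)).
have tot := @Q_sum1 R p ('I_(Mof n) * 'I_N)%type ('I_n + 'I_L)%type.
rewrite (bigID (fun e => Good e)) /= in tot.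
have hbad := @union R p 'I_(Mof n) 'I_N n L hp01.
have hA : \sum_(i : 'I_(Mof n)) \sum_(k : 'I_n)
     \sum_(e : {ffun ('I_(Mof n) * 'I_N) -> {ffun ('I_n + 'I_L) -> bool}} | [forall j : 'I_N, e (i, j) (inl k)]) Q p e
   <= (2 ^ n * n)%:R * p ^+ N.
  apply: (@le_trans _ _ (\sum_(i : 'I_(Mof n)) \sum_(k : 'I_n) p ^+ N)).
    apply: ler_sum => i _; apply: ler_sum => k _.
    by have := @Q_A R p _ 'I_N _ i (inl k) hp01; rewrite card_ord.
  rewrite sumr_const sumr_const !card_ord /Mof card_ffun card_bool card_ord.
  by rewrite -mulrnA mulr_natl mulnC.
have hnum := @numeric R n N p eps2 hn hp hp1 he hTh.
lra.
Qed.
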